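(* For $n\in\mathbb Z_{\ge0}$ and $x,y\in\mathbb Z_{\ge0}$, let $p^{(1/2)}_n(x,y)$ be the probability that a simple symmetric random walk on $\mathbb Z$ started from $x$, reflected at $0$ (i.e. one considers $|S_n|$) and killed with probability $1/2$, independently, at each return to site $0$, is alive at time $n$ and located at $y$. Then $$p^{(1/2)}_n(x,y)=p_n(x-y)-p_n(x+y+2),$$ where $p_n(z)$ is the probability that a simple symmetric random walk on $\mathbb Z$ started at $0$ is at $z$ at time $n$. *)

(* Defs.v *)
From HB Require Import structures.
From mathcomp Require Import all_boot all_order all_algebra.
Set Implicit Arguments. Unset Strict Implicit. Unset Printing Implicit Defensive.
Import Order.TTheory GRing.Theory Num.Theory.
Local Open Scope ring_scope.

(* A sign sequence s : {ffun 'I_n -> bool} encodes the n increments of a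
   simple symmetric random walk (true = +1, false = -1); each of the 2^n
   sequences has probability (1/2)^n. *)

Definition walk (n : nat) (x : int) (s : {ffun 'I_n -> bool}) (k : nat) : int :=
  x + \sum_(i < n | (i < k)%N) (if s i then 1 else -1).

Definition srw_prob (n : nat) (z : int) : rat :=
  \sum_(s : {ffun 'I_n -> bool})
     (1 / 2) ^+ n * (if walk 0 s n == z then 1 else 0).

(* Number of visits of S (equivalently of |S|) to 0 at times 0,...,n-1,
   i.e. the number of times the walk sits at 0 and then makes a step. *)
Definition visits0 (n : nat) (x : int) (s : {ffun 'I_n -> bool}) : nat :=
  #|[set k : 'I_n | walk x s k == 0]|.

(* Survival of the independent killings has
   probability (1/2)^(number of visits to 0 before time n). *)
Definition killed_prob (n x y : nat) : rat :=
  \sum_(s : {ffun 'I_n -> bool})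
     (1 / 2) ^+ n * (1 / 2) ^+ (visits0 x%:Z s)
       * (if absz (walk x%:Z s n) == y then 1 else 0).

(* Main.v *)
Require Import Defs.
From HB Require Import structures.
From mathcomp Require Import all_boot all_order all_algebra.
From mathcomp Require Import zify ring lra.
Set Implicit Arguments. Unset Strict Implicit. Unset Printing Implicit Defensive.
Import Order.TTheory GRing.Theory Num.Theory.
Local Open Scope ring_scope.

Definition ext (n : nat) (s : {ffun 'I_n -> bool}) (b : bool) : {ffun 'I_n.+1 -> bool} :=
  [ffun i : 'I_n.+1 => if insub (val i) is Some j then s j else b].

Definition unext (n : nat) (s : {ffun 'I_n.+1 -> bool}) : {ffun 'I_n -> bool} * bool :=
  ([ffun j : 'I_n => s (widen_ord (leqnSn n) j)], s ord_max).

Lemma ext_widen n s b (j : 'I_n) : ext s b (widen_ord (leqnSn n) j) = s j.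
Proof.
rewrite /ext ffunE /= insubT; first exact: ltn_ord.
by move=> H; congr (s _); apply: val_inj.
Qed.

Lemma ext_max n s b : ext s b (@ord_max n) = b.
Proof. by rewrite /ext ffunE /= insubF // ltnn. Qed.

Lemma ext_bij n : bijective (fun p : {ffun 'I_n -> bool} * bool => ext p.1 p.2).
Proof.
exists (@unext n).
- move=> [s b] /=; rewrite /unext ext_max; congr (_, _).
  by apply/ffunP => j; rewrite ffunE ext_widen.
- move=> s /=; apply/ffunP => i; rewrite /ext ffunE /=.
  case: insubP => [j Hj Hv|Hi].
  + rewrite ffunE; congr (s _); apply: val_inj; by rewrite /= Hv.
  + congr (s _); apply: val_inj => /=; move: (ltn_ord i); rewrite ltnS leq_eqVlt.
    by move: Hi; rewrite -leqNgt => Hi /orP[/eqP|] //; rewrite ltnNge Hi.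
Qed.

Definition step (b : bool) : int := if b then 1 else -1.

Lemma walk_ext n x (s : {ffun 'I_n -> bool}) b k : (k <= n)%N ->
  walk x (ext s b) k = walk x s k.
Proof.
move=> Hk; rewrite /walk; congr (_ + _).
rewrite big_mkcond big_ord_recr /= -big_mkcond /=.
rewrite ltnNge Hk /= addr0; apply: eq_bigr => i _; by rewrite ext_widen.
Qed.

Lemma walk_ext_last n x (s : {ffun 'I_n -> bool}) b :
  walk x (ext s b) n.+1 = walk x s n + step b.
Proof.
rewrite /walk big_mkcond big_ord_recr /= -big_mkcond /= ltnSn ext_max -addrA.
congr (_ + (_ + _)); rewrite [LHS]big_mkcond [RHS]big_mkcond /=; apply: eq_bigr => i _.
by rewrite ext_widen /= ltnS (ltnW (ltn_ord i)) (ltn_ord i).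
Qed.

Lemma visits_ext n x (s : {ffun 'I_n -> bool}) b :
  visits0 x (ext s b) = (visits0 x s + (walk x s n == 0))%N.
Proof.
rewrite /visits0 -!sum1_card big_mkcond big_ord_recr /=.
rewrite [in RHS]big_mkcond /=.
congr (_ + _)%N.
- by apply: eq_bigr => i _; rewrite !inE walk_ext // (ltnW (ltn_ord i)).
- by rewrite inE walk_ext //; case: (_ == _).
Qed.

Lemma sum_ext n (F : {ffun 'I_n.+1 -> bool} -> rat) :
  \sum_(s' : {ffun 'I_n.+1 -> bool}) F s' =
  \sum_(s : {ffun 'I_n -> bool}) (F (ext s true) + F (ext s false)).
Proof.
rewrite (reindex (fun p : {ffun 'I_n -> bool} * bool => ext p.1 p.2)) /=; last first.
  by apply: onW_bij; apply: ext_bij.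
rewrite -(pair_bigA _ (fun s b => F (ext s b))) /=.
by apply: eq_bigr => s _; rewrite big_bool.
Qed.

Lemma srw_rec n z :
  srw_prob n.+1 z = 1/2 * srw_prob n (z - 1) + 1/2 * srw_prob n (z + 1).
Proof.
rewrite /srw_prob sum_ext !big_distrr -big_split /=; apply: eq_bigr => s _.
rewrite !walk_ext_last /step.
have -> : (walk 0 s n + 1 == z) = (walk 0 s n == z - 1) by apply/eqP/eqP; lia.
have -> : (walk 0 s n + -1 == z) = (walk 0 s n == z + 1) by apply/eqP/eqP; lia.
rewrite exprS; case: (_ == _); case: (_ == _); ring.
Qed.

Lemma killed_rec n x y :
  killed_prob n.+1 x y =
  1/2 * (if y is y'.+1 then killed_prob n x y' else 0) + 1/2 * killed_prob n x y.+1.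
Proof.
rewrite /killed_prob sum_ext.
have -> : (if y is y'.+1 then
   \sum_(s : {ffun 'I_n -> bool}) (1 / 2) ^+ n * (1 / 2) ^+ visits0 x s *
     (if `|walk x s n| == y' then 1 else 0) else 0) =
   \sum_(s : {ffun 'I_n -> bool}) (1 / 2) ^+ n * (1 / 2) ^+ visits0 x s *
     (if (`|walk x s n|.+1 == y)%N then 1 else 0) :> rat.
  case: y => [|y]; last by apply: eq_bigr => s _.
  by rewrite big1 // => s _; rewrite mulr0.
rewrite !big_distrr -big_split /=; apply: eq_bigr => s _.
rewrite !visits_ext !walk_ext_last /step !exprD exprS.
case: (walk x s n) => [[|m]|m] /=.
- by rewrite add0n subnn expr1; field.
- by rewrite addn1 subn1 /= eqSS expr0; field.
- have -> : `|(Negz m + 1)%R|%N = m by lia.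
  by rewrite addn0 eqSS expr0; field.
Qed.

Lemma sum0 (F : {ffun 'I_0 -> bool} -> rat) :
  \sum_(s : {ffun 'I_0 -> bool}) F s = F [ffun i => true].
Proof.
apply: big_pred1 => s /=; by apply/esym/eqP/ffunP => -[].
Qed.

Theorem proposition3p1 (n x y : nat) :
  killed_prob n x y = srw_prob n (x%:Z - y%:Z) - srw_prob n (x%:Z + y%:Z + 2).
Proof.
elim: n y => [|n IH] y.
- rewrite /killed_prob /srw_prob.
  rewrite !sum0 /visits0 /walk !big_ord0 !addr0 expr0 !mul1r.
  have -> : #|[set k : 'I_0 | x%:Z +
      \sum_(i < 0 | (i < k)%N) (if [ffun=> true] i then 1 else -1) == 0]| = 0%N.
    by apply/eqP; rewrite -leqn0; apply: leq_trans (max_card _) _; rewrite card_ord.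
  have -> : (0 == x%:Z + y%:Z + 2) = false by apply/eqP; lia.
  have -> : (0 == x%:Z - y%:Z) = (x == y) by apply/eqP/eqP; lia.
  by rewrite /= expr0 mul1r subr0.
rewrite killed_rec !srw_rec IH.
case: y => [|y].
- rewrite /=.
  have -> : x%:Z - Posz 0 - 1 = x%:Z - Posz 1 by lia.
  have -> : x%:Z - Posz 0 + 1 = x%:Z + 1 by lia.
  have -> : x%:Z + Posz 0 + 2 - 1 = x%:Z + 1 by lia.
  have -> : x%:Z + Posz 0 + 2 + 1 = x%:Z + Posz 1 + 2 by lia.
  ring.
rewrite !IH.
have -> : x%:Z - y.+1%:Z + 1 = x%:Z - y%:Z by lia.
have -> : x%:Z - y.+1%:Z - 1 = x%:Z - y.+2%:Z by lia.
have -> : x%:Z + y.+1%:Z + 2 - 1 = x%:Z + y%:Z + 2 by lia.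
have -> : x%:Z + y.+1%:Z + 2 + 1 = x%:Z + y.+2%:Z + 2 by lia.
ring.
Qed.
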